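(* Let $(E,\mathcal{P})$ be a random locally convex module over $K$ with base $(\Omega,\mathcal{F},P)$, endowed with its $(\varepsilon,\lambda)$-topology, and let $G$ be a nonempty $L^0$-convex subset of $E$. If $G$ is $L^0$-convexly compact, then $G$ has the countable concatenation property: for every sequence $\{g_n\}_{n\in\mathbb{N}}$ in $G$ and every countable partition $\{A_n\}_{n\in\mathbb{N}}$ of $\Omega$ into sets in $\mathcal{F}$, there exists $g\in G$ with $\tilde I_{A_n}g=\tilde I_{A_n}g_n$ for all $n$.
   Context: $(\Omega,\mathcal{F},P)$ is a probability space, $K=\mathbb{R}$ or $\mathbb{C}$, $L^0(\mathcal{F},K)$ is the algebra of equivalence classes (modulo $P$-a.s. equality) of $K$-valued $\mathcal{F}$-measurable random variables, $L^0=L^0(\mathcal{F},\mathbb{R})$, $L^0_+=\{\xi\in L^0:\xi\ge0\}$; $\tilde I_A$ denotes the class of the indicator of $A\in\mathcal{F}$. An $L^0$-seminorm on an $L^0(\mathcal{F},K)$-module $E$ is a map $\|\cdot\|:E\to L^0_+$ with $\|\xi x\|=|\xi|\|x\|$ and $\|x+y\|\le\|x\|+\|y\|$. A random locally convex module $(E,\mathcal{P})$ is an $L^0(\mathcal{F},K)$-module $E$ with a family $\mathcal{P}$ of $L^0$-seminorms such that $\bigvee\{\|x\|:\|\cdot\|\in\mathcal{P}\}=0$ iff $x=\theta$. For finite nonempty $\mathcal{Q}\subset\mathcal{P}$ let $\|x\|_{\mathcal{Q}}=\bigvee_{\|\cdot\|\in\mathcal{Q}}\|x\|$; the $(\varepsilon,\lambda)$-topology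 on $E$ has local base at $\theta$ the sets $\{x: P\{\|x\|_{\mathcal{Q}}<\varepsilon\}>1-\lambda\}$ ($\mathcal{Q}$ finite nonempty, $\varepsilon>0$, $0<\lambda<1$). $G\subset E$ is $L^0$-convex if $\xi x+(1-\xi)y\in G$ for all $x,y\in G$, $\xi\in L^0$, $0\le\xi\le1$. An $L^0$-convex set $G$ is $L^0$-convexly compact if every family of $L^0$-convex subsets of $G$ which are closed (in the relative topology of $G$) and which has the finite intersection property has nonempty intersection. *)

(* Defs.v *)
From HB Require Import structures.
From mathcomp Require Import all_boot all_order all_algebra.
From mathcomp Require Import all_classical all_reals.
From mathcomp Require Import topology normedtype sequences numfun measure
  lebesgue_measure probability.
From mathcomp Require complex.
Import complex.

Set Implicit Arguments.
Unset Strict Implicit.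
Unset Printing Implicit Defensive.
Import Order.TTheory GRing.Theory Num.Theory.
Local Open Scope classical_set_scope.
Local Open Scope ring_scope.

Inductive scalar_field := Kreal | Kcomplex.

Section L0.
Context {d : measure_display} {Omega : measurableType d} {R : realType}.
Variable P : probability Omega R.

Definition aeq {T : Type} (f g : Omega -> T) : Prop :=
  {ae P, forall w, f w = g w}.

Definition cmod (z : R[i]) : R := Num.sqrt (complex.Re z ^+ 2 + complex.Im z ^+ 2).

(* xi : Omega -> R[i] is a representative of an element of L^0(F, K) *)
Definition L0K (K : scalar_field) (xi : Omega -> R[i]) : Prop :=
  [/\ measurable_fun setT (fun w => complex.Re (xi w)),
      measurable_fun setT (fun w => complex.Im (xi w)) &
      (K = Kreal -> forall w, complex.Im (xi w) = 0)].

Definition cst_C (xi : Omega -> R) : Omega -> R[i] := fun w => ((xi w)%:C)%C.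

(* E (with zero, addition, opposite and an action smul of representatives of
   L^0(F,K)) is an L^0(F,K)-module: an abelian group, module axioms for the
   pointwise ring of K-valued measurable functions, and the action only
   depends on the P-a.s. class of the scalar. *)
Definition is_L0module (K : scalar_field) (E : Type) (zero : E)
    (add : E -> E -> E) (opp : E -> E) (smul : (Omega -> R[i]) -> E -> E) :=
  [/\ (forall x y z, add x (add y z) = add (add x y) z),
      (forall x y, add x y = add y x),
      (forall x, add zero x = x) &
      (forall x, add x (opp x) = zero)] /\
  [/\ (forall xi x y, L0K K xi ->
          smul xi (add x y) = add (smul xi x) (smul xi y)),
      (forall xi eta x, L0K K xi -> L0K K eta ->
          smul (fun w => xi w + eta w) x = add (smul xi x) (smul eta x)),
      (forall xi eta x, L0K K xi -> L0K K eta ->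
          smul (fun w => xi w * eta w) x = smul xi (smul eta x)),
      (forall x, smul (fun _ => 1) x = x) &
      (forall xi eta x, L0K K xi -> L0K K eta -> aeq xi eta ->
          smul xi x = smul eta x)].

(* an L^0-seminorm, given by a choice of representatives nrm x of the
   L^0_+ - valued norm of x *)
Definition is_L0seminorm (K : scalar_field) (E : Type) (add : E -> E -> E)
    (smul : (Omega -> R[i]) -> E -> E) (nrm : E -> Omega -> R) :=
  [/\ (forall x, measurable_fun setT (nrm x)),
      (forall x, {ae P, forall w, 0 <= nrm x w}),
      (forall xi x, L0K K xi ->
          aeq (nrm (smul xi x)) (fun w => cmod (xi w) * nrm x w)) &
      (forall x y, {ae P, forall w, nrm (add x y) w <= nrm x w + nrm y w})].

(* (E, Pf) is a random locally convex module: Pf is a family of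
   L^0-seminorms with  \/ {||x|| : ||.|| in Pf} = 0  iff  x = zero.
   Since all ||x|| are >= 0, the essential supremum of the family vanishes
   iff every member vanishes P-a.s. *)
Definition is_RLCmodule (K : scalar_field) (E : Type) (zero : E)
    (add : E -> E -> E) (opp : E -> E) (smul : (Omega -> R[i]) -> E -> E)
    (Pf : set (E -> Omega -> R)) :=
  [/\ is_L0module K zero add opp smul,
      (forall nrm, Pf nrm -> is_L0seminorm K add smul nrm) &
      (forall x, (forall nrm, Pf nrm -> aeq (nrm x) (fun _ => 0)) <-> x = zero)].

Section Topology.
Variables (E : Type) (add : E -> E -> E) (opp : E -> E)
  (smul : (Omega -> R[i]) -> E -> E) (Pf : set (E -> Omega -> R)).

Definition normQ (Q : seq (E -> Omega -> R)) (x : E) : Omega -> R :=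
  fun w => \big[Num.max/0]_(nrm <- Q) nrm x w.

Definition Ubase (Q : seq (E -> Omega -> R)) (eps lam : R) : set E :=
  [set x | ((1 - lam)%:E < P [set w | (normQ Q x w < eps)%R])%E].

Definition is_Ubase (U : set E) : Prop :=
  exists Q eps lam, [/\ Q != [::], (forall nrm, nrm \in Q -> Pf nrm),
      0 < eps & 0 < lam < 1] /\ U = Ubase Q eps lam.

(* open sets of the (eps,lambda)-topology (a linear topology with local
   base Ubase at theta) *)
Definition el_open (O : set E) : Prop :=
  forall x, O x -> exists U, is_Ubase U /\
    (forall y, U (add y (opp x)) -> O y).

Definition el_closed (C : set E) : Prop := el_open (~` C).

Definition rel_closed (G F : set E) : Prop :=
  exists C, el_closed C /\ F = C `&` G.

Definition L0convex (G : set E) : Prop :=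
  forall x y, G x -> G y -> forall xi : Omega -> R, measurable_fun setT xi ->
    {ae P, forall w, 0 <= xi w <= 1} ->
    G (add (smul (cst_C xi) x) (smul (cst_C (fun w => 1 - xi w)) y)).

Definition L0convexly_compact (G : set E) : Prop :=
  L0convex G /\
  forall (Fam : set (set E)),
    (forall F, Fam F -> [/\ F `<=` G, L0convex F & rel_closed G F]) ->
    (forall s : seq (set E), (forall F, F \in s -> Fam F) ->
        exists x, forall F, F \in s -> F x) ->
    exists x, G x /\ forall F, Fam F -> F x.

Definition countable_concatenation (G : set E) : Prop :=
  forall (g : nat -> E), (forall n, G (g n)) ->
  forall (A : nat -> set Omega), (forall n, measurable (A n)) ->
    trivIset setT A -> \bigcup_n A n = setT ->
    exists g0, G g0 /\
      forall n, smul (cst_C \1_(A n)) g0 = smul (cst_C \1_(A n)) (g n).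

End Topology.
End L0.

(* Main.v *)
Require Import Defs.
From HB Require Import structures.
From mathcomp Require Import all_boot all_order all_algebra.
From mathcomp Require Import all_classical all_reals.
From mathcomp Require Import topology normedtype sequences numfun measure
  lebesgue_measure probability measurable_realfun.
From mathcomp Require Import lra.
From mathcomp Require complex.
Import complex.

Set Implicit Arguments.
Unset Strict Implicit.
Unset Printing Implicit Defensive.
Import Order.TTheory GRing.Theory Num.Theory.
Local Open Scope classical_set_scope.
Local Open Scope ring_scope.

Section Meas.
Context {d : measure_display} {Omega : measurableType d} {R : realType}.
Variable P : probability Omega R.

Lemma ae_ex (Q : Omega -> Prop) : {ae P, forall w, Q w} ->
  exists N, [/\ measurable N, P N = 0%E & forall w, ~ N w -> Q w].
Proof.
move=> [N [mN N0 sub]]; exists N; split => // w Nw.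
apply: contrapT => Qw; apply: Nw; exact: sub.
Qed.

Lemma mlt (f g : Omega -> R) : measurable_fun setT f -> measurable_fun setT g ->
  measurable [set w | f w < g w].
Proof.
move=> mf mg; have h := measurable_fun_ltr mf mg.
have := h measurableT [set true] I.
by rewrite setTI.
Qed.

Lemma pos_level (f : Omega -> R) : measurable_fun setT f ->
  {ae P, forall w, 0 <= f w} -> ~ aeq P f (fun _ => 0) ->
  exists m : nat, (0 < P [set w | ((m.+1%:R)^-1 < f w)%R])%E.
Proof.
move=> mf f0 nae; apply: contrapT => hno; apply: nae.
have S0 : forall m : nat, P [set w | (m.+1%:R)^-1 < f w] = 0%E.
  move=> m; apply/eqP; rewrite eq_le measure_ge0 andbT leNgt; apply/negP => h.
  by apply: hno; exists m.
rewrite /aeq.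
apply: (@negligibleS _ _ _ _ ((~` [set w | 0 <= f w]) `|` \bigcup_m [set w | (m.+1%:R)^-1 < f w])).
  move=> w /= fw; case: (pselect (0 <= f w)) => h; [right|by left].
  have : 0 < f w by rewrite lt_neqAle h andbT eq_sym; apply/eqP.
  move=> /ltr_add_invr [k]; rewrite add0r => hk; by exists k.
apply: negligibleU; first exact: f0.
apply: negligible_bigcup => m; exists [set w | (m.+1%:R)^-1 < f w]; split => //; last exact: S0.
exact: mlt.
Qed.
End Meas.
Section Alg.
Context {d : measure_display} {Omega : measurableType d} {R : realType}.
Variable P : probability Omega R.
Variables (K : scalar_field) (E : Type) (zero : E) (add : E -> E -> E)
  (opp : E -> E) (smul : (Omega -> R[i]) -> E -> E).
Hypothesis HM : is_L0module P K zero add opp smul.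

Let hA : forall x y z, add x (add y z) = add (add x y) z.
Proof. by case: HM => -[]. Qed.
Let hC : forall x y, add x y = add y x.
Proof. by case: HM => -[]. Qed.
Let h0 : forall x, add zero x = x.
Proof. by case: HM => -[]. Qed.
Let hN : forall x, add x (opp x) = zero.
Proof. by case: HM => -[]. Qed.
Let hsD : forall xi x y, L0K K xi -> smul xi (add x y) = add (smul xi x) (smul xi y).
Proof. by case: HM => _ []. Qed.
Let hDs : forall xi eta x, L0K K xi -> L0K K eta ->
          smul (fun w => xi w + eta w) x = add (smul xi x) (smul eta x).
Proof. by case: HM => _ []. Qed.
Let hMs : forall xi eta x, L0K K xi -> L0K K eta ->
          smul (fun w => xi w * eta w) x = smul xi (smul eta x).
Proof. by case: HM => _ []. Qed.
Let h1 : forall x, smul (fun _ => 1) x = x.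
Proof. by case: HM => _ []. Qed.

Lemma addx0 x : add x zero = x.
Proof. by rewrite hC h0. Qed.

Lemma add_cancel a b c : add a b = add a c -> b = c.
Proof.
move=> h; have : add (opp a) (add a b) = add (opp a) (add a c) by rewrite h.
by rewrite !hA [add (opp a) a]hC hN !h0.
Qed.

Lemma opp_uniq a b : add a b = zero -> b = opp a.
Proof. by move=> h; apply: (@add_cancel a); rewrite h hN. Qed.

Lemma idem_zero a : add a a = a -> a = zero.
Proof. by move=> h; apply: (@add_cancel a); rewrite h addx0. Qed.

Lemma L0K_cst (f : Omega -> R) : measurable_fun setT f -> L0K K (cst_C f).
Proof.
move=> mf; split => //; exact: measurable_cst.
Qed.

Lemma cstCM (f g : Omega -> R) :
  (fun w => cst_C f w * cst_C g w) = cst_C (fun w => f w * g w).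
Proof. by apply/funext => w; rewrite /cst_C rmorphM. Qed.

Lemma cstCD (f g : Omega -> R) :
  (fun w => cst_C f w + cst_C g w) = cst_C (fun w => f w + g w).
Proof. by apply/funext => w; rewrite /cst_C rmorphD. Qed.

Lemma smul_cst0 x : smul (cst_C (fun _ => 0)) x = zero.
Proof.
have m0 := @L0K_cst (fun _ => 0) (measurable_cst _).
apply: idem_zero; rewrite -hDs // cstCD.
by congr smul; apply/funext => w; rewrite addr0.
Qed.

Lemma smulx0 xi : L0K K xi -> smul xi zero = zero.
Proof. by move=> h; apply: idem_zero; rewrite -hsD // h0. Qed.

Lemma smul_opp xi x : L0K K xi -> smul xi (opp x) = opp (smul xi x).
Proof. by move=> h; apply: opp_uniq; rewrite -hsD // hN smulx0. Qed.

Lemma smulM (f g : Omega -> R) x : measurable_fun setT f -> measurable_fun setT g ->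
  smul (cst_C f) (smul (cst_C g) x) = smul (cst_C (fun w => f w * g w)) x.
Proof. by move=> mf mg; rewrite -hMs ?L0K_cst // cstCM. Qed.

Lemma smulD (f g : Omega -> R) x : measurable_fun setT f -> measurable_fun setT g ->
  add (smul (cst_C f) x) (smul (cst_C g) x) = smul (cst_C (fun w => f w + g w)) x.
Proof. by move=> mf mg; rewrite -hDs ?L0K_cst // cstCD. Qed.

Lemma smul_cst1 x : smul (cst_C (fun _ => 1)) x = x.
Proof. by rewrite -[RHS]h1; congr smul; apply/funext => w; rewrite /cst_C rmorph1. Qed.

End Alg.
Section Closed.
Context {d : measure_display} {Omega : measurableType d} {R : realType}.
Variable P : probability Omega R.
Variables (K : scalar_field) (E : Type) (zero : E) (add : E -> E -> E)
  (opp : E -> E) (smul : (Omega -> R[i]) -> E -> E) (Pf : set (E -> Omega -> R)).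
Hypothesis HE : is_RLCmodule P K zero add opp smul Pf.

Lemma HM_of : is_L0module P K zero add opp smul.
Proof. by case: HE. Qed.

Lemma opp_opp a : opp (opp a) = a.
Proof.
have HM := HM_of; case: (HM) => -[hA hC h0 hN] _.
by apply/esym/(opp_uniq HM); rewrite hC hN.
Qed.

Lemma closed_eq (A : set Omega) (mA : measurable A) (c : E) :
  el_closed P add opp Pf [set x | smul (cst_C \1_A) x = c].
Proof.
have HM := HM_of; case: (HM) => -[hA hC h0 hN] [hsD hDs hMs h1 hae].
case: HE => _ Hsn Hsep.
have mI : measurable_fun setT (\1_A : Omega -> R) by exact: measurable_indic.
have LI := L0K_cst K mI.
move=> x /= hx.
set w := add c (opp (smul (cst_C \1_A) x)).
have wne : w <> zero.
  move=> w0; apply: hx; rewrite /w hC in w0.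
  by rewrite (opp_uniq HM w0) opp_opp.
have [nrm [Pnrm nae]] : exists nrm, Pf nrm /\ ~ aeq P (nrm w) (fun _ => 0).
  apply: contrapT => hno; apply: wne; apply/Hsep => nrm Pn.
  apply: contrapT => hn; apply: hno; by exists nrm.
have [nm nge0 nhom ntri] := Hsn _ Pnrm.
have [m Sm] := pos_level (nm w) (nge0 w) nae.
set eps : R := (m.+1%:R)^-1.
set S := [set v | eps < nrm w v].
have mS : measurable S by apply: mlt => //; exact: measurable_cst.
have PSfin : P S = (fine (P S))%:E.
  rewrite fineK // ge0_fin_numE ?measure_ge0 //.
  by apply: (le_lt_trans (probability_le1 P mS)); rewrite ltey.
set delta := fine (P S).
have dpos : 0 < delta by rewrite -lte_fin -PSfin.
have dle1 : delta <= 1 by rewrite -lee_fin -PSfin probability_le1.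
have epos : 0 < eps by rewrite /eps invr_gt0 ltr0n.
exists (Ubase P [:: nrm] eps (delta / 2)); split.
  exists [:: nrm], eps, (delta / 2); split => //; split => //.
  - by move=> n0; rewrite mem_seq1 => /eqP ->.
  - apply/andP; split; first by rewrite divr_gt0.
    rewrite ltr_pdivrMr // (le_lt_trans dle1) // mul1r.
    by lra.

move=> y hU hy.
set u := add y (opp x).
have key : smul (cst_C \1_A) u = w.
  by rewrite /u hsD // hy (smul_opp HM).
have [N1 [mN1 N10 hN1]] := ae_ex (nhom _ u LI).
have [N2 [mN2 N20 hN2]] := ae_ex (nge0 u).
set B := [set v | nrm u v < eps].
have AB : [set v | normQ [:: nrm] u v < eps] = B.
  apply/funext => v; apply/propext; rewrite /B /normQ /=.
  rewrite bigop.big_cons bigop.big_nil gt_max epos andbT.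
  by [].
have mB : measurable B by apply: mlt => //; exact: measurable_cst.
have BS : B `<=` ~` S `|` (N1 `|` N2).
  move=> v /= Bv; case: (pselect (N1 v)) => k1; first by right; left.
  case: (pselect (N2 v)) => k2; first by right; right.
  left => Sv; have := hN1 v k1; have := hN2 v k2; rewrite key => g0 e.
  move: Sv; rewrite /S /= e /cst_C indicE /cmod /=.
  case: (v \in A) => /=.
    rewrite !expr2 !mul0r !mulr1 addr0 sqrtr1 mul1r => lt1.
    by move: (lt_trans lt1 Bv); rewrite ltxx.
  rewrite !expr2 !mul0r addr0 sqrtr0 mul0r => lt1.
  by move: (lt_trans lt1 epos); rewrite ltxx.
have mN : measurable (N1 `|` N2) by exact: measurableU.
have PN : P (N1 `|` N2) = 0%E.
  apply/eqP; rewrite eq_le measure_ge0 andbT.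
  rewrite (le_trans (measureU2 P mN1 mN2)) //.
  by move: N10 N20 => /= -> ->; rewrite adde0.
move: hU; rewrite /Ubase /= AB => hU.
have : (P B <= 1 - P S)%E.
  rewrite (le_trans (le_measure P _ _ BS)) ?inE //.
    by apply: measurableU => //; exact: measurableC.
  apply: (le_trans (measureU2 P _ mN)); first exact: measurableC.
  by move: PN => /= ->; rewrite adde0 probability_setC.
move=> h; have := lt_le_trans hU h; rewrite PSfin -EFinD lte_fin.
apply/negP; rewrite -leNgt lerD2l lerN2 ler_pdivrMr // ler_peMr // ?ltW //.
by lra.
Qed.
End Closed.
Lemma m1B {d : measure_display} {Omega : measurableType d} {R : realType}
  (xi : Omega -> R) : measurable_fun setT xi -> measurable_fun setT (fun w => 1 - xi w).
Proof. by move=> mx; apply: measurable_funB => //; exact: measurable_cst. Qed.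

Lemma disj_prod {T : Type} {R : realType} (A B : set T) : A `&` B = set0 ->
  (fun w => \1_A w * \1_(~` B) w) = (\1_A : T -> R) /\
  (fun w => \1_A w * (1 - \1_(~` B) w)) = (fun _ => 0 : R).
Proof.
move=> AB; split; apply/funext => w; rewrite !indicE in_setC;
  case: (boolP (w \in A)) => ha; case: (boolP (w \in B)) => hb /=;
  rewrite ?mul1r ?mul0r ?mulr1 ?mulr0 ?subrr ?subr0 //.
- have : (A `&` B) w by split; rewrite -inE.
  by rewrite AB.
- have : (A `&` B) w by split; rewrite -inE.
  by rewrite AB.
Qed.

Lemma self_prod {T : Type} {R : realType} (B : set T) :
  (fun w => \1_B w * \1_(~` B) w) = (fun _ => 0 : R) /\
  (fun w => \1_B w * (1 - \1_(~` B) w)) = (\1_B : T -> R).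
Proof.
split; apply/funext => w; rewrite !indicE in_setC;
  case: (boolP (w \in B)) => hb /=;
  rewrite ?mul1r ?mul0r ?mulr1 ?mulr0 ?subrr ?subr0 //.
Qed.

Theorem proposition4p1 (d : measure_display) (Omega : measurableType d)
  (R : realType) (P : probability Omega R) (K : scalar_field)
  (E : Type) (zero : E) (add : E -> E -> E) (opp : E -> E)
  (smul : (Omega -> R[i]) -> E -> E) (Pf : set (E -> Omega -> R))
  (HE : is_RLCmodule P K zero add opp smul Pf)
  (G : set E) (G_nonempty : exists g, G g)
  (G_convex : L0convex P add smul G)
  (G_compact : L0convexly_compact P add opp smul Pf G) :
  countable_concatenation smul G.
Proof.
have HM := HM_of HE; case: (HM) => -[hA hC h0 hN] [hsD hDs hMs h1 hae].
move=> g Gg A mA tA cA.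
have mI : forall n, measurable_fun setT (\1_(A n) : Omega -> R).
  by move=> n; exact: measurable_indic.
have LI : forall n, L0K K (cst_C (\1_(A n) : Omega -> R)).
  by move=> n; exact: L0K_cst.
pose Ck n := [set x | smul (cst_C \1_(A n)) x = smul (cst_C \1_(A n)) (g n)].
have disj : forall k n, k <> n -> A k `&` A n = set0.
  move=> k n kn; apply/seteqP; split => // w [hk hn]; apply: kn.
  by apply: (tA k n I I); exists w.
have fin : forall N, exists x, G x /\ forall k, (k < N)%N -> Ck k x.
  elim => [|N [x [Gx hx]]]; first by case: G_nonempty => x Gx; exists x.
  pose xi : Omega -> R := \1_(~` A N).
  have mxi : measurable_fun setT xi.
    by apply: measurable_indic; exact: measurableC.
  exists (add (smul (cst_C xi) x) (smul (cst_C (fun w => 1 - xi w)) (g N))).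
  split.
    apply: G_convex => //; apply: aeW => w; rewrite /xi indicE.
    by case: (w \in ~` A N); rewrite ?ler01 ?lexx.
  move=> k; rewrite ltnS leq_eqVlt => /orP [/eqP -> | kN].
    rewrite /Ck /= hsD // !(smulM HM) //; last exact: m1B.
    have [e1 e2] := @self_prod _ R (A N).
    by rewrite e1 e2 (smul_cst0 HM) h0.
  rewrite /Ck /= hsD // !(smulM HM) //; last exact: m1B.
  have kN' : k <> N by move=> e; rewrite e ltnn in kN.
  have [e1 e2] := @disj_prod _ R _ _ (disj _ _ kN').
  by rewrite e1 e2 (smul_cst0 HM) (addx0 HM); exact: hx.
pose Fam := [set F : set E | exists n, F = Ck n `&` G].
case: G_compact => _ /(_ Fam) [].
- move=> F [n ->]; split.
  + by move=> x [].
  + move=> x y [hx Gx] [hy Gy] xi mxi xi01; split; last exact: G_convex.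
    rewrite /Ck /= hsD // !(smulM HM) //; last exact: m1B.
    have e1 : (fun w => \1_(A n) w * xi w) = (fun w => xi w * \1_(A n) w).
      by apply/funext => w; rewrite mulrC.
    have e2 : (fun w => \1_(A n) w * (1 - xi w)) = (fun w => (1 - xi w) * \1_(A n) w).
      by apply/funext => w; rewrite mulrC.
    rewrite e1 e2 -!(smulM HM) //; last exact: m1B.

    rewrite hx hy (smulD HM) //; last exact: m1B.
    have e3 : (fun w => xi w + (1 - xi w)) = (fun _ => 1 : R).
      by apply/funext => w; rewrite addrC subrK.
    by rewrite e3 (smul_cst1 HM).
  + exists (Ck n); split; last by [].
    exact: (closed_eq HE (mA n)).
- move=> s hs.
  have [N hNN] : exists N, forall F, F \in s -> exists2 n, (n < N)%N & F = Ck n `&` G.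
    elim: s hs => [|F0 s IH] hs.
      by exists 0%N => F; rewrite in_nil.
    have [n0 e0] := hs F0 (mem_head _ _).
    have [N hNN] : exists N, forall F, F \in s -> exists2 n, (n < N)%N & F = Ck n `&` G.
      by apply: IH => F h; apply: hs; rewrite in_cons h orbT.
    exists (maxn N n0.+1) => F; rewrite in_cons => /orP [/eqP -> | h].
      by exists n0 => //; rewrite leq_max leqnn orbT.
    have [n ltn ->] := hNN F h; exists n => //.
    by rewrite leq_max ltn.
  have [x [Gx hx]] := fin N.
  exists x => F /hNN [n ltn ->]; split => //; exact: hx.
- move=> x [Gx hx]; exists x; split => // n.
  by have [] := hx (Ck n `&` G) (ex_intro _ n erefl).
Qed.
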